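(* Let $\mathcal{S}$ be a finite set of road segments and $y_1,\dots,y_N$ (collectively $y_{[N]}$) the routes of $N$ historical trips, each a nonempty set of distinct segments. For each $n$ and $s\in y_n$ one observes $T'_{n,s}=\theta_s+\varepsilon_{n,s}$, where the $\theta_s$ are i.i.d. with mean $\mu$ and variance $\tau^2>0$, independent of the errors; for each $n$ the errors $(\varepsilon_{n,s})_{s\in y_n}$ have mean $0$ and covariances $\sigma_{s,t}$; errors from different trips are independent. Fix a route $y\subseteq\mathcal{S}$. (1) Given a partition $\mathscr{S}_y$ of $y$ into super-segments, with $N_S=|\{n:S\subseteq y_n\}|\ge1$ for each $S\in\mathscr{S}_y$, the generalized segment-based estimator $$\hat\Theta_y=\sum_{S\in\mathscr{S}_y}\Big[(1-\phi_S)|S|\mu+\phi_S\frac{\sum_{n:S\subseteq y_n}\sum_{s\in S}T'_{n,s}}{N_S}\Big]$$ has minimal integrated risk over all real weights $(\phi_S)_{S\in\mathscr{S}_y}$ exactly when $(\phi_S)=(\phi^\ast_S)$, where $(\phi^\ast_S)_{S\in\mathscr{S}_y}$ is the unique solution of the linear system $$\sum_{T\in\mathscr{S}_y}\frac{N_{S\cup T}}{N_SN_T}\phi^\ast_T\Big(\sum_{s\in S,t\in T}\sigma_{s,t}\Big)+(\phi^\ast_S-1)|S|\tau^2=0,\qquad S\in\mathscr{S}_y.$$ (2) Given a neighborhood $\delta(y)$ (a set of historical routes) with notation $M_{\delta(y)}$, $N^{\delta(y)}_s$, $\mathcal{S}_{\delta(y)}$, $\bar y_{\delta(y)}$ as below,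 the route-based estimator with weight $\phi$, $$(1-\phi)|y|\mu+\phi\frac{\sum_{n:y_n\in\delta(y)}\sum_{s\in y_n}T'_{n,s}}{M_{\delta(y)}},$$ has minimal integrated risk over all real $\phi$ when $\phi=\phi^\ast_{\delta(y)}(M_{\delta(y)})$ with $$\phi^\ast_{\delta(y)}(M_{\delta(y)})=\frac{\big(\sum_{s\in y}N^{\delta(y)}_s\big)\tau^2}{\sum_{s\in\mathcal{S}_{\delta(y)}}\frac{(N^{\delta(y)}_s)^2}{M_{\delta(y)}}\tau^2+\frac{\sum_{n:y_n\in\delta(y)}\sum_{s,t\in y_n}\sigma_{s,t}}{M_{\delta(y)}}+M_{\delta(y)}\mu^2(\bar y_{\delta(y)}-|y|)^2}.$$
   Context: The integrated risk of an estimator $\hat\Theta_y$ is $\mathbb{E}[(\hat\Theta_y-\sum_{s\in y}\theta_s)^2\mid y_{[N]}]$, expectation over errors and prior of $\theta$, conditional on the historical routes. $N_{S\cup T}=|\{n:S\cup T\subseteq y_n\}|$. $M_{\delta(y)}=\sum_n\mathbf 1\{y_n\in\delta(y)\}$, $N^{\delta(y)}_s=|\{n:y_n\in\delta(y),s\in y_n\}|$, $\mathcal{S}_{\delta(y)}=\bigcup_{y'\in\delta(y)}y'$, $\bar y_{\delta(y)}=\sum_{n:y_n\in\delta(y)}|y_n|/M_{\delta(y)}$. No distributional assumption beyond means and covariances is imposed. *)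

(* Defs.v *)
From HB Require Import structures.
From mathcomp Require Import all_boot all_order all_algebra.
From mathcomp Require Import all_classical all_reals all_analysis.
Set Implicit Arguments. Unset Strict Implicit. Unset Printing Implicit Defensive.
Import Order.TTheory GRing.Theory Num.Theory.
Local Open Scope ring_scope.

Section TravelTime.
Context {d : measure_display} {T : measurableType d} {R : realType}.
Context {Seg : finType} {N : nat}.
Variables (yN : 'I_N -> {set Seg}) (theta : Seg -> T -> R)
  (eps : 'I_N -> Seg -> T -> R).

Definition Tobs (n : 'I_N) (s : Seg) : T -> R := fun w => theta s w + eps n s w.

Definition NS (S : {set Seg}) : nat := #|[set n | S \subset yN n]|.

Definition truth (y : {set Seg}) : T -> R := fun w => \sum_(s in y) theta s w.

Definition seg_est (mu : R) (Sy : {set {set Seg}}) (phi : {set Seg} -> R)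
  : T -> R := fun w =>
  \sum_(S in Sy) ((1 - phi S) * #|S|%:R * mu
     + phi S * ((\sum_(n | S \subset yN n) \sum_(s in S) Tobs n s w)
                / (NS S)%:R)).

Definition seg_system (sigma : Seg -> Seg -> R) (tau2 : R)
  (Sy : {set {set Seg}}) (phi : {set Seg} -> R) : Prop :=
  forall S, S \in Sy ->
    \sum_(S' in Sy) ((NS (S :|: S'))%:R / ((NS S)%:R * (NS S')%:R) * phi S'
                      * (\sum_(s in S) \sum_(t in S') sigma s t))
    + (phi S - 1) * #|S|%:R * tau2 = 0.

Definition Mdelta (delta : {set {set Seg}}) : nat := #|[set n | yN n \in delta]|.
Definition Ndelta (delta : {set {set Seg}}) (s : Seg) : nat :=
  #|[set n | (yN n \in delta) && (s \in yN n)]|.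
Definition Sdelta (delta : {set {set Seg}}) : {set Seg} :=
  \bigcup_(y' in delta) y'.
Definition ybar (delta : {set {set Seg}}) : R :=
  (\sum_(n | yN n \in delta) #|yN n|%:R) / (Mdelta delta)%:R.

Definition route_est (mu : R) (y : {set Seg}) (delta : {set {set Seg}})
  (phi : R) : T -> R := fun w =>
  (1 - phi) * #|y|%:R * mu
  + phi * ((\sum_(n | yN n \in delta) \sum_(s in yN n) Tobs n s w)
           / (Mdelta delta)%:R).

Definition phistar_route (sigma : Seg -> Seg -> R) (mu tau2 : R)
  (y : {set Seg}) (delta : {set {set Seg}}) : R :=
  let M := (Mdelta delta)%:R in
  ((\sum_(s in y) (Ndelta delta s)%:R) * tau2) /
  ((\sum_(s in Sdelta delta) (Ndelta delta s)%:R ^+ 2 / M) * tau2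
   + (\sum_(n | yN n \in delta) \sum_(s in yN n) \sum_(t in yN n) sigma s t) / M
   + M * mu ^+ 2 * (ybar delta - #|y|%:R) ^+ 2).

End TravelTime.

Definition risk {d} {T : measurableType d} {R : realType}
  (P : probability T R) (est tru : T -> R) : \bar R :=
  'E_P[fun w => (est w - tru w) ^+ 2].

(* Main.v *)
Require Import Defs.
From HB Require Import structures.
From mathcomp Require Import all_boot all_order all_algebra.
From mathcomp Require Import all_classical all_reals all_analysis.
From mathcomp Require Import ring lra.
Import Order.TTheory GRing.Theory Num.Theory.
Local Open Scope ring_scope.
Local Open Scope ereal_scope.
Local Open Scope ring_scope.
Set Implicit Arguments.
Unset Strict Implicit.
Section Prob.
Context {d : measure_display} {T : measurableType d} {R : realType}
  (P : probability T R).

Lemma L2_L1 {f : T -> R} : f \in Lfun P 2%:E -> f \in Lfun P 1.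
Proof. by apply: Lfun_subset12; rewrite fin_num_measure. Qed.

Lemma E_sum (I : Type) (r : seq I) (F : I -> T -> R) :
  (forall i, F i \in Lfun P 1) ->
  (fun w => \sum_(i <- r) F i w) \in Lfun P 1 /\
  'E_P[fun w => \sum_(i <- r) F i w] = (\sum_(i <- r) 'E_P[F i])%E.
Proof.
move=> hF; elim: r => [|x r [IH1 IH2]].
  have -> : (fun w => \sum_(i <- [::]) F i w) = cst 0.
    by apply/funext => w; rewrite big_nil.
  by rewrite big_nil Lfun_cst expectation_cst.
have -> : (fun w => \sum_(i <- x :: r) F i w) = F x \+ (fun w => \sum_(i <- r) F i w).
  by apply/funext => w; rewrite big_cons.
by rewrite rpredD // expectationD // IH2 big_cons.
Qed.

Definition ex (f : T -> R) : R := fine 'E_P[f].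
Definition cv (f g : T -> R) : R := fine (covariance P f g).

Lemma E_scale (f : T -> R) k : f \in Lfun P 1 ->
  (fun w => k * f w) \in Lfun P 1 /\ 'E_P[fun w => k * f w] = (k * ex f)%:E.
Proof.
move=> hf.
have -> : (fun w => k * f w) = k \o* f by apply/funext => w /=; rewrite mulrC.
split; first by rewrite Lfun_scale.
by rewrite expectationZl // /ex EFinM fineK ?expectation_fin_num.
Qed.

Lemma E_lin (I : finType) (Z : I -> T -> R) (k : I -> R) :
  (forall i, Z i \in Lfun P 1) ->
  (fun w => \sum_i k i * Z i w) \in Lfun P 1 /\
  'E_P[fun w => \sum_i k i * Z i w] = (\sum_i k i * ex (Z i))%:E.
Proof.
move=> hZ.
have [h1 h2] := @E_sum _ (index_enum I) (fun i w => k i * Z i w)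
   (fun i => proj1 (E_scale (k i) (hZ i))).
split => //; rewrite h2 -sumEFin; apply: eq_bigr => i _.
exact: proj2 (E_scale (k i) (hZ i)).
Qed.

Lemma E_prod (f g : T -> R) : f \in Lfun P 2%:E -> g \in Lfun P 2%:E ->
  (fun w => f w * g w) \in Lfun P 1 /\
  'E_P[fun w => f w * g w] = (cv f g + ex f * ex g)%:E.
Proof.
move=> hf hg.
have h1 : (fun w => f w * g w) \in Lfun P 1 by exact: Lfun2_mul_Lfun1.
split => //.
have hc := covarianceE (L2_L1 hf) (L2_L1 hg) h1.
have fE := expectation_fin_num (L2_L1 hf).
have gE := expectation_fin_num (L2_L1 hg).
have pE := expectation_fin_num h1.
rewrite /cv hc /ex.
rewrite -(fineK pE) -(fineK fE) -(fineK gE) /=.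
by rewrite subrK.
Qed.

Lemma E_bilin (I : finType) (Z : I -> T -> R) (a b : I -> R) (c c' : R) :
  (forall i, Z i \in Lfun P 2%:E) ->
  'E_P[fun w => (c + \sum_i a i * Z i w) * (c' + \sum_i b i * Z i w)] =
  ((c + \sum_i a i * ex (Z i)) * (c' + \sum_i b i * ex (Z i))
   + \sum_i \sum_j a i * b j * cv (Z i) (Z j))%:E.
Proof.
move=> hZ.
have hZ1 i : Z i \in Lfun P 1 by exact: L2_L1.
pose F1 := fun w => \sum_j (c * b j) * Z j w.
pose F2 := fun w => \sum_i (c' * a i) * Z i w.
pose G i := fun w => \sum_j (a i * b j) * (Z i w * Z j w).
pose F3 := fun w => \sum_i 1 * G i w.
have hG i : G i \in Lfun P 1 /\
   'E_P[G i] = (\sum_j (a i * b j) * (cv (Z i) (Z j) + ex (Z i) * ex (Z j)))%:E.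
  have [h1 h2] := @E_lin _ (fun j w => Z i w * Z j w) (fun j => a i * b j)
     (fun j => proj1 (E_prod (hZ i) (hZ j))).
  split => //; rewrite /G h2; congr (_%:E); apply: eq_bigr => j _.
  by rewrite /ex (proj2 (E_prod (hZ i) (hZ j))) /=.
have [hF1 eF1] := @E_lin _ Z (fun j => c * b j) hZ1.
have [hF2 eF2] := @E_lin _ Z (fun j => c' * a j) hZ1.
have [hF3 eF3] := @E_lin _ G (fun _ => 1) (fun i => proj1 (hG i)).
have -> : (fun w => (c + \sum_i a i * Z i w) * (c' + \sum_i b i * Z i w)) =
   ((cst (c * c') \+ F1) \+ F2) \+ F3.
  apply/funext => w /=; rewrite /F1 /F2 /F3 /G.
  have e1 : c * (\sum_i b i * Z i w) = \sum_j c * b j * Z j w.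
    by rewrite big_distrr /=; apply: eq_bigr => j _; rewrite mulrA.
  have e2 : (\sum_i a i * Z i w) * c' = \sum_i c' * a i * Z i w.
    by rewrite big_distrl /=; apply: eq_bigr => j _; rewrite mulrC mulrA.
  have e3 : (\sum_i a i * Z i w) * (\sum_i b i * Z i w) =
      \sum_i 1 * \sum_j a i * b j * (Z i w * Z j w).
    rewrite big_distrl /=; apply: eq_bigr => i _; rewrite mul1r big_distrr /=.
    by apply: eq_bigr => j _; rewrite mulrACA.
  by rewrite mulrDl !mulrDr e1 e2 e3 !addrA.
rewrite expectationD ?rpredD ?Lfun_cst // expectationD ?rpredD ?Lfun_cst //.
rewrite expectationD ?Lfun_cst // expectation_cst eF1 eF2 eF3.
rewrite -!EFinD; congr (_%:E).
have -> : \sum_i 1 * ex (G i) = \sum_i \sum_j (a i * b j) * (cv (Z i) (Z j) + ex (Z i) * ex (Z j)).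
  by apply: eq_bigr => i _; rewrite mul1r /ex (proj2 (hG i)).
have e1 : c * (\sum_i b i * ex (Z i)) = \sum_j c * b j * ex (Z j).
  by rewrite big_distrr /=; apply: eq_bigr => j _; rewrite mulrA.
have e2 : (\sum_i a i * ex (Z i)) * c' = \sum_i c' * a i * ex (Z i).
  by rewrite big_distrl /=; apply: eq_bigr => j _; rewrite mulrC mulrA.
have e3 : (\sum_i a i * ex (Z i)) * (\sum_i b i * ex (Z i)) =
    \sum_i \sum_j a i * b j * (ex (Z i) * ex (Z j)).
  rewrite big_distrl /=; apply: eq_bigr => i _; rewrite big_distrr /=.
  by apply: eq_bigr => j _; rewrite mulrACA.
have e4 : \sum_i \sum_j a i * b j * (cv (Z i) (Z j) + ex (Z i) * ex (Z j)) =
   \sum_i \sum_j a i * b j * (ex (Z i) * ex (Z j)) + \sum_i \sum_j a i * b j * cv (Z i) (Z j).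
  rewrite -big_split /=; apply: eq_bigr => i _; rewrite -big_split /=.
  by apply: eq_bigr => j _; rewrite -mulrDr addrC.
rewrite e4 mulrDl !mulrDr e1 e2 e3; ring.
Qed.
End Prob.

Section Quad.
Context {R : realFieldType}.

Lemma exists_sol k (G : 'I_k -> 'I_k -> R) (dv : 'I_k -> R) :
  (forall v : 'I_k -> R, 0 <= \sum_i \sum_j v i * v j * G i j) ->
  (forall i, 0 < dv i) ->
  exists z : 'I_k -> R, forall i, \sum_j G i j * z j + (z i - 1) * dv i = 0.
Proof.
move=> hG hd.
pose Mx : 'M[R]_k := \matrix_(i, j) (G j i + (i == j)%:R * dv i).
have hMx i j : Mx i j = G j i + (i == j)%:R * dv i by rewrite mxE.
have hdet : \det Mx != 0.
  apply/negP => /det0P [w wn0 wM].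
  pose v := fun i : 'I_k => (w 0 i : R).
  have [j0 hj0] : exists j0, v j0 != 0.
    apply/existsP; apply: contraR wn0 => /existsPn h.
    apply/eqP/matrixP => i j; rewrite ord1 mxE; by move: (h j); rewrite negbK /v => /eqP ->.
  have h0 : \sum_j v j * (w *m Mx) 0 j = 0.
    by rewrite wM; apply: big1 => l _; rewrite mxE mulr0.
  have h1 : \sum_j v j * (w *m Mx) 0 j =
      \sum_j \sum_i v j * v i * G j i + \sum_j v j ^+ 2 * dv j.
    rewrite -big_split /=; apply: eq_bigr => j _.
    rewrite mxE big_distrr /= (bigD1 j) //= [in RHS](bigD1 j) //= addrAC; congr (_ + _).
      rewrite hMx eqxx mul1r /v.
ring.
    apply: eq_bigr => i hij; rewrite hMx (negPf hij) mul0r addr0 /v; ring.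
  have h2 : 0 < \sum_j v j ^+ 2 * dv j.
    rewrite (bigD1 j0) //=.
    have : 0 < v j0 ^+ 2 * dv j0 by apply: mulr_gt0 => //; rewrite exprn_even_gt0.
    have : 0 <= \sum_(j < k | j != j0) v j ^+ 2 * dv j.
      by apply: sumr_ge0 => j _; apply: mulr_ge0; [exact: sqr_ge0 | exact: ltW].
    lra.
  have h3 := hG v.
  clear -h0 h1 h2 h3; lra.
have hu : Mx \in unitmx by rewrite unitmxE unitfE.
pose b : 'rV[R]_k := \row_j dv j.
have [zr hz] : exists zr : 'rV[R]_k, zr *m Mx = b.
  by exists (b *m invmx Mx); rewrite mulmxKV.
exists (fun j => zr 0 j) => i.
have := congr1 (fun m : 'rV[R]_k => m 0 i) hz; rewrite /= !mxE => h.
have h' : \sum_j zr 0 j * Mx j i = \sum_j G i j * zr 0 j + zr 0 i * dv i.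
  rewrite (bigD1 i) // [in RHS](bigD1 i) //= hMx eqxx mul1r.
  rewrite (eq_bigr (fun j => G i j * zr 0 j)); first by ring.
  by move=> j hj; rewrite hMx (negPf hj) mul0r addr0 mulrC.
rewrite h' in h; rewrite mulrBl mul1r; lra.
Qed.

Section QuadA.
Context (I : finType) (A : {set I}) (C : I -> I -> R) (dd : I -> R).
Context (hsym : forall S T, S \in A -> T \in A -> C S T = C T S).
Context (hpsd : forall x : I -> R, 0 <= \sum_(S in A) \sum_(T in A) x S * x T * C S T).
Context (hdd : forall S, S \in A -> 0 < dd S).

Definition Fq (x : I -> R) := \sum_(S in A) dd S * (x S - 1) ^+ 2
  + \sum_(S in A) \sum_(T in A) x S * x T * C S T.
Definition Gq (u : I -> R) := \sum_(S in A) dd S * u S ^+ 2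
  + \sum_(S in A) \sum_(T in A) u S * u T * C S T.
Definition sysq (x : I -> R) := forall S, S \in A ->
  \sum_(T in A) C S T * x T + (x S - 1) * dd S = 0.

Lemma Fq_key (z x : I -> R) : sysq z -> Fq x = Fq z + Gq (fun S => x S - z S).
Proof.
move=> hz; set u := fun S => x S - z S.
have e1 : \sum_(S in A) dd S * (x S - 1) ^+ 2 = \sum_(S in A) dd S * (z S - 1) ^+ 2
   + \sum_(S in A) dd S * u S ^+ 2 + 2 * \sum_(S in A) u S * ((z S - 1) * dd S).
  rewrite big_distrr -!big_split /=; apply: eq_bigr => S _; rewrite /u; ring.
have e3 : \sum_(S in A) \sum_(T in A) z S * u T * C S T =
    \sum_(S in A) \sum_(T in A) u S * (C S T * z T).
  rewrite exchange_big /=; apply: eq_bigr => S hS; apply: eq_bigr => T hT.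
  rewrite hsym //; ring.
have e2 : \sum_(S in A) \sum_(T in A) x S * x T * C S T =
    \sum_(S in A) \sum_(T in A) z S * z T * C S T
  + \sum_(S in A) \sum_(T in A) u S * u T * C S T
  + 2 * \sum_(S in A) \sum_(T in A) u S * (C S T * z T).
  have -> : \sum_(S in A) \sum_(T in A) x S * x T * C S T =
     \sum_(S in A) \sum_(T in A) (z S * z T * C S T + u S * u T * C S T
        + u S * (C S T * z T) + z S * u T * C S T).
    by apply: eq_bigr => S _; apply: eq_bigr => T _; rewrite /u; ring.
  under eq_bigr do rewrite !big_split /=.
  rewrite !big_split /= e3; ring.
have hz0 : \sum_(S in A) u S * (\sum_(T in A) C S T * z T + (z S - 1) * dd S) = 0.
  by apply: big1 => S hS; rewrite hz // mulr0.
have e4 : \sum_(S in A) u S * (\sum_(T in A) C S T * z T + (z S - 1) * dd S) =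
   \sum_(S in A) \sum_(T in A) u S * (C S T * z T) + \sum_(S in A) u S * ((z S - 1) * dd S).
  rewrite -big_split /=; apply: eq_bigr => S _; rewrite mulrDr big_distrr //.
rewrite /Fq /Gq e1 e2; move: hz0; rewrite e4 => hz0.
have -> : 2 * \sum_(S in A) \sum_(T in A) u S * (C S T * z T) =
  - 2 * \sum_(S in A) u S * ((z S - 1) * dd S).
  have -> : \sum_(S in A) \sum_(T in A) u S * (C S T * z T) =
     - \sum_(S in A) u S * ((z S - 1) * dd S) by lra.
  ring.
ring.
Qed.

Lemma Gq_ge0 u : 0 <= Gq u.
Proof.
rewrite /Gq; apply: addr_ge0; last exact: hpsd.
apply: sumr_ge0 => S hS.
by apply: mulr_ge0; [exact/ltW/hdd | exact: sqr_ge0].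
Qed.

Lemma Gq_eq0 u : Gq u <= 0 -> {in A, forall S, u S = 0}.
Proof.
move=> hG.
have h1 : 0 <= \sum_(S in A) dd S * u S ^+ 2.
  by apply: sumr_ge0 => S hS; apply: mulr_ge0; [exact/ltW/hdd | exact: sqr_ge0].
have h2 := hpsd u.
have h3 : \sum_(S in A) dd S * u S ^+ 2 = 0 by move: hG; rewrite /Gq; lra.
move=> S hS.
have h4 : dd S * u S ^+ 2 = 0.
  apply: (psumr_eq0P _ h3) => // T hT.
  by apply: mulr_ge0; [exact/ltW/hdd | exact: sqr_ge0].
move/eqP: h4; rewrite mulf_eq0 sqrf_eq0 gt_eqF ?hdd //= => /eqP //.
Qed.


Lemma Gq_zero u : {in A, forall S, u S = 0} -> Gq u = 0.
Proof.
move=> hu; rewrite /Gq big1 ?add0r; last by move=> S hS; rewrite hu // expr0n mulr0.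
by apply: big1 => S hS; apply: big1 => T hT; rewrite hu // !mul0r.
Qed.

Lemma Fq_min z : sysq z -> forall x, (forall y, Fq x <= Fq y) <-> {in A, x =1 z}.
Proof.
move=> hz x; split.
  move=> hmin S hS; have := hmin z; rewrite (Fq_key x hz) => h.
  have h' : Gq (fun S => x S - z S) <= 0 by lra.
  by apply/eqP; rewrite -subr_eq0; apply/eqP; exact: (Gq_eq0 h').
move=> hxz y; rewrite (Fq_key y hz) (Fq_key x hz) Gq_zero; last first.
  by move=> S hS; rewrite hxz // subrr.
have := Gq_ge0 (fun S => y S - z S); lra.
Qed.

Lemma sys_uniq z x : sysq z -> sysq x -> {in A, x =1 z}.
Proof.
move=> hz hx; apply/(Fq_min hz) => y.
rewrite (Fq_key y hx); have := Gq_ge0 (fun S => y S - x S); lra.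
Qed.

Lemma sys_exists : exists z, sysq z.
Proof.
case: (set_0Vmem A) => [hA0 | [S0 hS0]].
  by exists (fun _ => 0) => S; rewrite hA0 inE.
pose e := fun i : 'I_#|A| => enum_val (A := mem A) i.
have he i : e i \in A by exact: enum_valP.
have hG : forall v : 'I_#|A| -> R, 0 <= \sum_i \sum_j v i * v j * C (e i) (e j).
  move=> v; have := hpsd (fun S => v (enum_rank_in hS0 S)).
  rewrite big_enum_val; under eq_bigr do rewrite big_enum_val.
  by rewrite /e; under eq_bigr do under eq_bigr do rewrite !enum_valK_in.
have hd : forall i, 0 < dd (e i) by move=> i; apply: hdd.
have [z hz] := exists_sol hG hd.
exists (fun S => z (enum_rank_in hS0 S)) => S hS.
have := hz (enum_rank_in hS0 S); rewrite /e enum_rankK_in // => h.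
rewrite big_enum_val /=; under eq_bigr do rewrite enum_valK_in.
exact: h.
Qed.

End QuadA.
End Quad.

Section Struct.
Context {d : measure_display} {T : measurableType d} {R : realType}
  (P : probability T R) (Seg : finType) (N : nat)
  (yN : 'I_N -> {set Seg})
  (theta : Seg -> T -> R) (eps : 'I_N -> Seg -> T -> R)
  (mu tau2 : R) (sigma : Seg -> Seg -> R).
Context
  (htheta_L2 : forall s, theta s \in Lfun P 2%:E)
  (heps_L2 : forall n s, s \in yN n -> eps n s \in Lfun P 2%:E)
  (htheta_mean : forall s, ('E_P[theta s])%E = mu%:E)
  (htheta_var : forall s, ('V_P[theta s])%E = tau2%:E)
  (htheta_uncorr : forall s t, s != t -> covariance P (theta s) (theta t) = 0%E)
  (htheta_eps : forall s n t, t \in yN n -> covariance P (theta s) (eps n t) = 0%E)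
  (heps_mean : forall n s, s \in yN n -> ('E_P[eps n s])%E = 0%E)
  (heps_cov : forall n s t, s \in yN n -> t \in yN n ->
     covariance P (eps n s) (eps n t) = (sigma s t)%:E)
  (heps_indep : forall n m s t, n != m -> s \in yN n -> t \in yN m ->
     covariance P (eps n s) (eps m t) = 0%E).

Definition lin (c : R) (al : Seg -> R) (be : 'I_N -> Seg -> R) : T -> R :=
  fun w => c + \sum_s al s * theta s w + \sum_n \sum_(s in yN n) be n s * eps n s w.

Definition Qe (be be' : 'I_N -> Seg -> R) : R :=
  \sum_n \sum_(s in yN n) \sum_(t in yN n) be n s * be' n t * sigma s t.

Definition Zs (i : Seg + ('I_N * Seg)) : T -> R :=
  match i with
  | inl s => theta s
  | inr p => if p.2 \in yN p.1 then eps p.1 p.2 else cst 0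
  end.

Definition coef (al : Seg -> R) (be : 'I_N -> Seg -> R) (i : Seg + ('I_N * Seg)) : R :=
  match i with inl s => al s | inr p => be p.1 p.2 end.

Arguments Zs i : simpl never.

Lemma Zs_L2 i : Zs i \in Lfun P 2%:E.
Proof.
case: i => [s|[n s]]; rewrite /Zs /=; first exact: htheta_L2.
by case: ifP => h; [exact: heps_L2 | exact: Lfun_cst].
Qed.

Lemma lin_Zs c al be w : lin c al be w = c + \sum_i coef al be i * Zs i w.
Proof.
rewrite /lin big_sumType /Zs /= -addrA; congr (_ + (_ + _)).
rewrite -(pair_big xpredT xpredT (fun n s => be n s * (if s \in yN n then eps n s else cst 0) w)) /=.
apply: eq_bigr => n _; rewrite big_mkcond /=; apply: eq_bigr => s _.
by case: ifP => //= _; rewrite mulr0.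
Qed.

Lemma ex_Zs i : ex P (Zs i) = match i with inl _ => mu | inr _ => 0 end.
Proof.
case: i => [s|[n s]]; rewrite /Zs /=; first by rewrite /ex htheta_mean.
by case: ifP => h; rewrite /ex ?heps_mean // expectation_cst.
Qed.


Lemma cv_tt s t : cv P (theta s) (theta t) = if s == t then tau2 else 0.
Proof.
case: eqP => [<-|/eqP h]; rewrite /cv.
  by have := htheta_var s; rewrite /variance => ->.
by rewrite htheta_uncorr.
Qed.

Lemma cv_Zs i j : cv P (Zs i) (Zs j) =
  match i, j with
  | inl s, inl t => if s == t then tau2 else 0
  | inr p, inr q => if (p.2 \in yN p.1) && (q.2 \in yN q.1) && (p.1 == q.1)
                    then sigma p.2 q.2 else 0
  | _, _ => 0
  end.
Proof.
case: i => [s|[n s]]; case: j => [t|[m t]]; rewrite /Zs /=.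
- exact: cv_tt.
- case: ifP => h; rewrite /cv ?covariance_cst_r //.
  by rewrite htheta_eps.
- rewrite /cv covarianceC; case: ifP => h; rewrite ?covariance_cst_r //.
  by rewrite htheta_eps.
- case: ifP => hs; last by rewrite /cv covariance_cst_l.
  case: ifP => ht; last by rewrite /cv covariance_cst_r.
  rewrite /=; move: ht; case: eqP => [<- ht|/eqP hnm ht]; first by rewrite /cv heps_cov.
  by rewrite /cv heps_indep.
Qed.

Lemma E_struct c al be c' al' be' :
  'E_P[fun w => lin c al be w * lin c' al' be' w] =
  ((c + mu * \sum_s al s) * (c' + mu * \sum_s al' s)
   + tau2 * \sum_s al s * al' s + Qe be be')%:E.
Proof.
have -> : (fun w => lin c al be w * lin c' al' be' w) =
   (fun w => (c + \sum_i coef al be i * Zs i w) * (c' + \sum_i coef al' be' i * Zs i w)).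
  by apply/funext => w; rewrite !lin_Zs.
rewrite E_bilin; last exact: Zs_L2.
have hm a b : \sum_i coef a b i * ex P (Zs i) = mu * \sum_s a s.
  rewrite big_sumType /= big_distrr /=.
  rewrite [X in _ + X]big1 ?addr0; last by move=> [n s] _; rewrite ex_Zs mulr0.
  by apply: eq_bigr => s _; rewrite ex_Zs mulrC.
rewrite !hm -addrA; congr (_ + _)%:E.
rewrite big_sumType /=.
have h1 : \sum_s \sum_j coef al be (inl s) * coef al' be' j * cv P (Zs (inl s)) (Zs j)
    = tau2 * \sum_s al s * al' s.
  rewrite big_distrr /=; apply: eq_bigr => s _.
  rewrite big_sumType /= [X in _ + X]big1 ?addr0; last by move=> p _; rewrite cv_Zs mulr0.
  rewrite (bigD1 s) //= big1 ?addr0; last first.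
    by move=> t /negPf hts; rewrite cv_Zs eq_sym hts mulr0.
  by rewrite cv_Zs eqxx mulrC mulrA.
have h2 : \sum_p \sum_j coef al be (inr p) * coef al' be' j * cv P (Zs (inr p)) (Zs j)
    = Qe be be'.
  rewrite /Qe -(pair_big xpredT xpredT (fun n s =>
      \sum_j coef al be (inr (n, s)) * coef al' be' j * cv P (Zs (inr (n, s))) (Zs j))) /=.
  apply: eq_bigr => n _; rewrite [RHS]big_mkcond /=; apply: eq_bigr => s _.
  rewrite big_sumType /= big1 ?add0r; last by move=> t _; rewrite cv_Zs mulr0.
  rewrite -(pair_big xpredT xpredT (fun m t =>
      coef al be (inr (n, s)) * coef al' be' (inr (m, t)) * cv P (Zs (inr (n, s))) (Zs (inr (m, t))))) /=.
  rewrite (bigD1 n) //= [X in _ + X]big1 ?addr0; last first.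
    move=> m hmn; apply: big1 => t _; rewrite cv_Zs /= eq_sym (negPf hmn).
    by rewrite andbF mulr0.
  case: ifP => hs; last first.
    by apply: big1 => t _; rewrite cv_Zs /= hs mulr0.
  rewrite [RHS]big_mkcond /=; apply: eq_bigr => t _.
  rewrite cv_Zs /= hs eqxx andbT /=.
  by case: ifP => _; rewrite ?mulr0.
by rewrite h1 h2.
Qed.


Lemma Qe_ge0 be : 0 <= Qe be be.
Proof.
have := E_struct 0 (fun _ => 0) be 0 (fun _ => 0) be.
have -> : (fun w => lin 0 (fun _ => 0) be w * lin 0 (fun _ => 0) be w) =
   (fun w => lin 0 (fun _ => 0) be w ^+ 2) by apply/funext => w; rewrite expr2.
move=> h.
have h2 : (0 <= 'E_P[fun w => (lin 0 (fun _ => 0) be w ^+ 2)%R])%E.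
  by apply: expectation_ge0 => w; exact: sqr_ge0.
move: h2; rewrite h lee_fin !big1 ?mulr0 ?addr0 ?add0r ?mul0r ?add0r //.
Qed.

Lemma Qe_scale k be be' : Qe (fun n s => k * be n s) (fun n s => k * be' n s) = k ^+ 2 * Qe be be'.
Proof.
rewrite /Qe big_distrr /=; apply: eq_bigr => n _.
rewrite big_distrr /=; apply: eq_bigr => s _.
rewrite big_distrr /=; apply: eq_bigr => t _.
by rewrite expr2 mulrACA -!mulrA.
Qed.

Lemma risk_lin f c al be : (forall w, f w = lin c al be w) ->
  'E_P[fun w => f w ^+ 2] =
  ((c + mu * \sum_s al s) ^+ 2 + tau2 * \sum_s al s ^+ 2 + Qe be be)%:E.
Proof.
move=> hf.
have -> : (fun w => f w ^+ 2) = (fun w => lin c al be w * lin c al be w).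
  by apply/funext => w; rewrite hf expr2.
by rewrite E_struct expr2; congr (_ + _ + _)%:E; apply: eq_bigr => s _; rewrite expr2.
Qed.

Lemma exch (Q : pred 'I_N) (F : Seg -> R) :
  \sum_(n | Q n) \sum_(s in yN n) F s =
  \sum_s (#|[set n | Q n && (s \in yN n)]|)%:R * F s.
Proof.
rewrite (exchange_big_dep xpredT) //=; apply: eq_bigr => s _.
transitivity (\sum_(n in [set n | Q n && (s \in yN n)]) F s).
  by apply: eq_bigl => n; rewrite inE.
by rewrite sumr_const mulr_natl.
Qed.


Lemma sum_ind (A : {set Seg}) : \sum_s (s \in A)%:R = #|A|%:R :> R.
Proof.
transitivity (\sum_(s in A) (1 : R)); last by rewrite sumr_const.
by rewrite [RHS]big_mkcond /=; apply: eq_bigr => s _; case: (s \in A).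
Qed.

Lemma part2 (y : {set Seg}) (delta : {set {set Seg}})
  (hyN : forall n, (0 < #|yN n|)%N) (htau : 0 < tau2)
  (hM : (0 < Mdelta yN delta)%N) (phi : R) :
  (risk P (route_est yN theta eps mu y delta
             (phistar_route yN sigma mu tau2 y delta)) (truth theta y)
   <= risk P (route_est yN theta eps mu y delta phi) (truth theta y))%E.
Proof.
set M : R := (Mdelta yN delta)%:R.
have Mpos : 0 < M by rewrite ltr0n.
have M0 : M != 0 by rewrite gt_eqF.
set Nd := fun s => (Ndelta yN delta s)%:R : R.
pose a1 := fun s => Nd s / M.
pose a0 := fun s => (s \in y)%:R : R.
pose b1 := fun (n : 'I_N) (s : Seg) => (yN n \in delta)%:R / M : R.
have herr ph w : route_est yN theta eps mu y delta ph w - truth theta y w =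
    lin ((1 - ph) * #|y|%:R * mu) (fun s => ph * a1 s - a0 s) (fun n s => ph * b1 n s) w.
  rewrite /route_est /truth /lin /Tobs.
  have e1 : \sum_(n | yN n \in delta) \sum_(s in yN n) (theta s w + eps n s w) =
     \sum_s Nd s * theta s w + \sum_n (yN n \in delta)%:R * \sum_(s in yN n) eps n s w.
    under eq_bigr do rewrite big_split /=.
    rewrite big_split /=.
    congr (_ + _); first by rewrite exch.
    rewrite [LHS]big_mkcond /=; apply: eq_bigr => n _.
    by case: (yN n \in delta); rewrite ?mul1r ?mul0r.
  have e2 : \sum_s (ph * a1 s - a0 s) * theta s w =
      ph / M * \sum_s Nd s * theta s w - \sum_(s in y) theta s w.
    have -> : \sum_(s in y) theta s w = \sum_s a0 s * theta s w.
      rewrite big_mkcond; apply: eq_bigr => s _; rewrite /a0.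
      by case: (s \in y); rewrite ?mul1r ?mul0r.
    rewrite big_distrr -sumrB; apply: eq_bigr => s _; rewrite /a1 /=; ring.
  have e3 : \sum_n \sum_(s in yN n) ph * b1 n s * eps n s w =
      ph / M * \sum_n (yN n \in delta)%:R * \sum_(s in yN n) eps n s w.
    rewrite big_distrr; apply: eq_bigr => n _ /=.
    rewrite mulrA big_distrr; apply: eq_bigr => s _ /=; rewrite /b1; ring.
  rewrite e1 e2 e3 -/M; ring.
have sa1 : \sum_s a1 s = ybar yN delta.
  rewrite /ybar -/M -big_distrl /=; congr (_ / _).
  have := exch (fun n => yN n \in delta) (fun _ => 1).
  under [in X in X -> _]eq_bigr do rewrite sumr_const.
  move=> ->; apply: eq_bigr => s _; rewrite mulr1 //.
have sa0 : \sum_s a0 s = #|y|%:R by rewrite sum_ind.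
pose K2 := mu ^+ 2 * (ybar yN delta - #|y|%:R) ^+ 2 + tau2 * \sum_s a1 s ^+ 2 + Qe b1 b1.
pose K1 := tau2 * \sum_s a1 s * a0 s.
pose K0 := tau2 * \sum_s a0 s ^+ 2.
have hrisk ph : risk P (route_est yN theta eps mu y delta ph) (truth theta y) =
    (ph ^+ 2 * K2 - 2 * ph * K1 + K0)%:E.
  rewrite /risk (risk_lin (herr ph)) Qe_scale; congr (_%:E).
  have -> : \sum_s (ph * a1 s - a0 s) = ph * ybar yN delta - #|y|%:R.
    by rewrite sumrB -big_distrr sa1 sa0.
  have -> : \sum_s (ph * a1 s - a0 s) ^+ 2 =
     ph ^+ 2 * \sum_s a1 s ^+ 2 - 2 * ph * \sum_s a1 s * a0 s + \sum_s a0 s ^+ 2.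
    rewrite !big_distrr -sumrB -big_split /=; apply: eq_bigr => s _; ring.
  rewrite /K2 /K1 /K0; ring.
set ps := phistar_route yN sigma mu tau2 y delta.
set Sg := \sum_(n | yN n \in delta) \sum_(s in yN n) \sum_(t in yN n) sigma s t.
set Num := (\sum_(s in y) Nd s) * tau2.
set Den := (\sum_(s in Sdelta delta) Nd s ^+ 2 / M) * tau2 + Sg / M
   + M * mu ^+ 2 * (ybar yN delta - #|y|%:R) ^+ 2.
have hps : ps = Num / Den by [].
have hQ : Qe b1 b1 = Sg / M / M.
  rewrite /Qe /Sg [in RHS]big_mkcond /= !big_distrl /=; apply: eq_bigr => n _.
  rewrite /b1; case: (yN n \in delta) => /=.
    rewrite !big_distrl /=; apply: eq_bigr => s _.
    rewrite !big_distrl /=; apply: eq_bigr => t _; field; exact: M0.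
  by rewrite !mul0r; apply: big1 => s _; apply: big1 => t _; rewrite !mul0r.
have hNd s : s \notin Sdelta delta -> Nd s = 0.
  move=> hs; rewrite /Nd /Ndelta; apply/eqP; rewrite pnatr_eq0 cards_eq0; apply/eqP.
  apply/setP => n; rewrite !inE; apply/negbTE; apply/andP => [[h1 h2]].
  by move/negP: hs; apply; apply/bigcupP; exists (yN n).
have hA : \sum_s a1 s ^+ 2 = (\sum_(s in Sdelta delta) Nd s ^+ 2 / M) / M.
  rewrite big_distrl [RHS]big_mkcond /=; apply: eq_bigr => s _.
  case: ifP => hs; rewrite /a1; first by field.
  by rewrite hNd ?hs // mul0r expr0n.
have hB : \sum_s a1 s * a0 s = (\sum_(s in y) Nd s) / M.
  rewrite big_distrl [RHS]big_mkcond /=; apply: eq_bigr => s _.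
  by rewrite /a1 /a0; case: (s \in y) => /=; rewrite ?mulr1 ?mulr0 ?mul0r.
have Sg0 : 0 <= Sg / M.
  have -> : Sg / M = Qe b1 b1 * M by rewrite hQ; field.
  by apply: mulr_ge0; [exact: Qe_ge0 | exact: ltW].
have [n0 hn0] : exists n0, yN n0 \in delta.
  move: hM; rewrite /Mdelta card_gt0 => /set0Pn [n0]; rewrite inE => h; by exists n0.
have [s0 hs0] : exists s0, s0 \in yN n0 by apply/set0Pn; rewrite -card_gt0.
have hs0S : s0 \in Sdelta delta by apply/bigcupP; exists (yN n0).
have Nd0 : 0 < Nd s0.
  rewrite /Nd /Ndelta ltr0n card_gt0; apply/set0Pn; exists n0; by rewrite inE hn0 hs0.
have Spos : 0 < \sum_(s in Sdelta delta) Nd s ^+ 2 / M.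
  rewrite (bigD1 s0) //=.
  have h1 : 0 < Nd s0 ^+ 2 / M by apply: divr_gt0 => //; exact: exprn_gt0.
  have h2 : 0 <= \sum_(s in Sdelta delta | s != s0) Nd s ^+ 2 / M.
    by apply: sumr_ge0 => s _; apply: divr_ge0; [exact: sqr_ge0 | exact: ltW].
  lra.
have Denpos : 0 < Den.
  have h3 : 0 <= M * mu ^+ 2 * (ybar yN delta - #|y|%:R) ^+ 2.
    by apply: mulr_ge0; [apply: mulr_ge0; [exact: ltW | exact: sqr_ge0] | exact: sqr_ge0].
  have h4 : 0 < (\sum_(s in Sdelta delta) Nd s ^+ 2 / M) * tau2 by exact: mulr_gt0.
  rewrite /Den; lra.
have K2M : K2 = Den / M.
  rewrite /K2 /Den hA hQ; field; exact: M0.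
have K1M : K1 = Num / M by rewrite /K1 /Num hB; field; exact: M0.
have hK : K1 = ps * K2.
  rewrite K1M K2M hps; field; apply/andP; split; [exact: M0 | by rewrite gt_eqF].
have K2pos : 0 <= K2 by rewrite K2M; apply: divr_ge0; exact: ltW.
rewrite !hrisk lee_fin -subr_ge0 hK.
have -> : phi ^+ 2 * K2 - 2 * phi * (ps * K2) + K0 - (ps ^+ 2 * K2 - 2 * ps * (ps * K2) + K0)
   = K2 * (phi - ps) ^+ 2 by ring.
by apply: mulr_ge0 => //; exact: sqr_ge0.
Qed.


Lemma sum_indT (J : finType) (B : {set J}) : \sum_j (j \in B)%:R = #|B|%:R :> R.
Proof.
transitivity (\sum_(j in B) (1 : R)); last by rewrite sumr_const.
by rewrite [RHS]big_mkcond /=; apply: eq_bigr => s _; case: (s \in B).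
Qed.

Lemma sum_sub (A B : {set Seg}) (H : Seg -> R) : A \subset B ->
  \sum_(s in B) (s \in A)%:R * H s = \sum_(s in A) H s.
Proof.
move=> hAB; rewrite big_mkcond [RHS]big_mkcond /=; apply: eq_bigr => s _.
case hA: (s \in A); last by case: (s \in B); rewrite ?mul0r.
by rewrite (fintype.subsetP hAB s hA) mul1r.
Qed.

Lemma sigma_sym n s t : s \in yN n -> t \in yN n -> sigma t s = sigma s t.
Proof.
move=> hs ht; have := heps_cov hs ht; rewrite covarianceC heps_cov //.
by case.
Qed.

Lemma Qe_sym be be' : Qe be be' = Qe be' be.
Proof.
rewrite /Qe; apply: eq_bigr => n _; rewrite exchange_big /=.
apply: eq_bigr => s hs; apply: eq_bigr => t ht.
by rewrite (sigma_sym hs ht) [be n t * _]mulrC.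
Qed.

Lemma Qe_suml (J : finType) (B : pred J) (g : J -> 'I_N -> Seg -> R) be' :
  Qe (fun n s => \sum_(j in B) g j n s) be' = \sum_(j in B) Qe (g j) be'.
Proof.
rewrite /Qe.
under eq_bigr do under eq_bigr do under eq_bigr do rewrite !big_distrl /=.
under eq_bigr do under eq_bigr do rewrite exchange_big /=.
under eq_bigr do rewrite exchange_big /=.
by rewrite exchange_big.
Qed.

Lemma Qe_scalel k be be' : Qe (fun n s => k * be n s) be' = k * Qe be be'.
Proof.
rewrite /Qe big_distrr /=; apply: eq_bigr => n _; rewrite big_distrr /=; apply: eq_bigr => s _.
by rewrite big_distrr /=; apply: eq_bigr => t _; rewrite !mulrA.
Qed.

Lemma Qe_bilin (J : finType) (B : pred J) (x : J -> R) (f : J -> 'I_N -> Seg -> R) :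
  Qe (fun n s => \sum_(j in B) x j * f j n s) (fun n s => \sum_(j in B) x j * f j n s)
  = \sum_(i in B) \sum_(j in B) x i * x j * Qe (f i) (f j).
Proof.
rewrite Qe_suml; apply: eq_bigr => i _.
rewrite Qe_scalel Qe_sym Qe_suml big_distrr /=; apply: eq_bigr => j _.
by rewrite Qe_scalel Qe_sym mulrA.
Qed.


Definition bS (S : {set Seg}) (n : 'I_N) (s : Seg) : R :=
  (S \subset yN n)%:R * (s \in S)%:R / (NS yN S)%:R.

Lemma Qe_bS S U : Qe (bS S) (bS U) = (NS yN (S :|: U))%:R *
  ((\sum_(s in S) \sum_(t in U) sigma s t) / ((NS yN S)%:R * (NS yN U)%:R)).
Proof.
set K := (\sum_(s in S) \sum_(t in U) sigma s t) / ((NS yN S)%:R * (NS yN U)%:R).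
transitivity (\sum_n ((S :|: U) \subset yN n)%:R * K).
  rewrite /Qe; apply: eq_bigr => n _; rewrite finset.subUset.
  case hS: (S \subset yN n); case hT: (U \subset yN n) => /=;
    try by rewrite mul0r; apply: big1 => s _; apply: big1 => t _; rewrite /bS hS hT /=; ring.
  rewrite mul1r.
  have -> : \sum_(s in yN n) \sum_(t in yN n) bS S n s * bS U n t * sigma s t =
     \sum_(s in yN n) (s \in S)%:R * \sum_(t in yN n) (t \in U)%:R *
        (sigma s t / ((NS yN S)%:R * (NS yN U)%:R)).
    apply: eq_bigr => s _; rewrite big_distrr /=; apply: eq_bigr => t _.
    rewrite /bS hS hT /= invfM; ring.
  under eq_bigr do rewrite sum_sub //.
  rewrite sum_sub // /K big_distrl /=; apply: eq_bigr => s _.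
  by rewrite big_distrl.
rewrite -big_distrl /=; congr (_ * _).
have -> : \sum_n ((S :|: U) \subset yN n)%:R =
    \sum_n (n \in [set n | S :|: U \subset yN n])%:R :> R.
  by apply: eq_bigr => n _; rewrite inE.
by rewrite sum_indT.
Qed.


Lemma pblock_sum (y : {set Seg}) Sy (hp : finset.partition Sy y) (F : {set Seg} -> R) s :
  \sum_(S in Sy) (s \in S)%:R * F S = if s \in y then F (finset.pblock Sy s) else 0.
Proof.
move: hp => /and3P [/eqP hcov htriv h0].
case: ifP => hs.
  have hc : s \in finset.cover Sy by rewrite hcov.
  rewrite (bigD1 (finset.pblock Sy s)) ?finset.pblock_mem //= finset.mem_pblock hc mul1r big1 ?addr0 //.
  move=> S /andP [hS hne]; case hsS: (s \in S); last by rewrite mul0r.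
  by move: hne; rewrite (finset.def_pblock htriv hS hsS) eqxx.
apply: big1 => S hS; case hsS: (s \in S); last by rewrite mul0r.
exfalso; move: hs; rewrite -hcov => /negP; apply; rewrite /finset.cover.
by apply/bigcupP; exists S.
Qed.

Lemma eS_lem (S : {set Seg}) (w : T) : (0 < NS yN S)%N ->
  (\sum_(n | S \subset yN n) \sum_(s in S) (theta s w + eps n s w)) / (NS yN S)%:R
  = \sum_(s in S) theta s w + \sum_n \sum_(s in yN n) bS S n s * eps n s w.
Proof.
move=> hN; have hN0 : (NS yN S)%:R != 0 :> R by rewrite pnatr_eq0 -lt0n.
under eq_bigr do rewrite big_split /=.
rewrite big_split /=.
have e1 : \sum_(n | S \subset yN n) \sum_(s in S) theta s w =
    (NS yN S)%:R * \sum_(s in S) theta s w.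
  transitivity (\sum_(n in [set n | S \subset yN n]) \sum_(s in S) theta s w).
    by apply: eq_bigl => n; rewrite inE.
  by rewrite sumr_const mulr_natl.
have e2 : \sum_n \sum_(s in yN n) bS S n s * eps n s w =
    (\sum_(n | S \subset yN n) \sum_(s in S) eps n s w) / (NS yN S)%:R.
  rewrite [in RHS]big_mkcond big_distrl /=; apply: eq_bigr => n _.
  case hSn: (S \subset yN n).
    rewrite big_distrl /= -(sum_sub _ hSn) /=; apply: eq_bigr => s _.
    rewrite /bS hSn /=; ring.
  by rewrite mul0r; apply: big1 => s _; rewrite /bS hSn /=; ring.
rewrite e1 e2; field; exact: hN0.
Qed.

Lemma err_seg (y : {set Seg}) Sy (hp : finset.partition Sy y)
  (hN : forall S, S \in Sy -> (0 < NS yN S)%N) (phi : {set Seg} -> R) (w : T) :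
  seg_est yN theta eps mu Sy phi w - truth theta y w =
  lin (\sum_(S in Sy) (1 - phi S) * #|S|%:R * mu)
      (fun s => \sum_(S in Sy) phi S * (s \in S)%:R - (s \in y)%:R)
      (fun n s => \sum_(S in Sy) phi S * bS S n s) w.
Proof.
rewrite /seg_est /truth /lin /Tobs.
have -> : \sum_(S in Sy) ((1 - phi S) * #|S|%:R * mu +
     phi S * ((\sum_(n | S \subset yN n) \sum_(s in S) (theta s w + eps n s w)) / (NS yN S)%:R))
  = \sum_(S in Sy) (1 - phi S) * #|S|%:R * mu
    + \sum_(S in Sy) phi S * \sum_(s in S) theta s w
    + \sum_(S in Sy) phi S * \sum_n \sum_(s in yN n) bS S n s * eps n s w.
  rewrite -!big_split /=; apply: eq_bigr => S hS; rewrite eS_lem ?hN //; ring.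
have e1 : \sum_s (\sum_(S in Sy) phi S * (s \in S)%:R - (s \in y)%:R) * theta s w
   = \sum_(S in Sy) phi S * \sum_(s in S) theta s w - \sum_(s in y) theta s w.
  under eq_bigr do rewrite mulrBl big_distrl /=.
  rewrite sumrB exchange_big /=; congr (_ - _).
    apply: eq_bigr => S _; rewrite big_distrr [RHS]big_mkcond /=; apply: eq_bigr => s _.
    by case: (s \in S); rewrite /= ?mulr1 ?mulr0 ?mul1r ?mul0r.
  rewrite [RHS]big_mkcond /=; apply: eq_bigr => s _.
  by case: (s \in y); rewrite /= ?mul1r ?mul0r.
have e2 : \sum_n \sum_(s in yN n) (\sum_(S in Sy) phi S * bS S n s) * eps n s w
   = \sum_(S in Sy) phi S * \sum_n \sum_(s in yN n) bS S n s * eps n s w.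
  under eq_bigr do under eq_bigr do rewrite big_distrl /=.
  under eq_bigr do rewrite exchange_big /=.
  rewrite exchange_big /=; apply: eq_bigr => S _.
  rewrite big_distrr /=; apply: eq_bigr => n _.
  rewrite big_distrr /=; apply: eq_bigr => s _; ring.
rewrite e1 e2; ring.
Qed.


Lemma risk_seg (y : {set Seg}) Sy (hp : finset.partition Sy y)
  (hN : forall S, S \in Sy -> (0 < NS yN S)%N) (phi : {set Seg} -> R) :
  risk P (seg_est yN theta eps mu Sy phi) (truth theta y) =
  (Fq Sy (fun S U => Qe (bS S) (bS U)) (fun S => #|S|%:R * tau2) phi)%:E.
Proof.
rewrite /risk (risk_lin (err_seg hp hN phi)) Qe_bilin /Fq; congr (_%:E).
have hc : \sum_(S in Sy) (1 - phi S) * #|S|%:R * mu +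
    mu * \sum_s (\sum_(S in Sy) phi S * (s \in S)%:R - (s \in y)%:R) = 0.
  rewrite sumrB sum_ind exchange_big /=.
  have -> : \sum_(S in Sy) \sum_s phi S * (s \in S)%:R = \sum_(S in Sy) phi S * #|S|%:R.
    by apply: eq_bigr => S _; rewrite -big_distrr sum_ind.
  rewrite (card_partition hp) natr_sum mulrBr !big_distrr -sumrB /= -big_split /=.
  by apply: big1 => S _; ring.
rewrite hc expr0n /= add0r; congr (_ + _).
have ha s : (\sum_(S in Sy) phi S * (s \in S)%:R - (s \in y)%:R) ^+ 2 =
    \sum_(S in Sy) (s \in S)%:R * ((phi S - 1) ^+ 2).
  have -> : \sum_(S in Sy) phi S * (s \in S)%:R = \sum_(S in Sy) (s \in S)%:R * phi S.
    by apply: eq_bigr => S _; rewrite mulrC.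
  rewrite !(pblock_sum hp); case: (s \in y) => /=; ring.
under eq_bigr do rewrite ha.
rewrite exchange_big big_distrr /=; apply: eq_bigr => S _.
rewrite -big_distrl /= sum_ind; ring.
Qed.


Lemma part1 (y : {set Seg}) (htau : 0 < tau2) Sy (hp : finset.partition Sy y)
  (hN : forall S, S \in Sy -> (0 < NS yN S)%N) :
  exists phis : {set Seg} -> R,
    seg_system yN sigma tau2 Sy phis /\
    (forall psi, seg_system yN sigma tau2 Sy psi -> {in Sy, psi =1 phis}) /\
    (forall phi : {set Seg} -> R,
       (forall psi : {set Seg} -> R,
          (risk P (seg_est yN theta eps mu Sy phi) (truth theta y)
           <= risk P (seg_est yN theta eps mu Sy psi) (truth theta y))%E)
       <-> {in Sy, phi =1 phis}).
Proof.
set C := fun S U => Qe (bS S) (bS U).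
set dd := fun S : {set Seg} => #|S|%:R * tau2.
have hsym : forall S U, S \in Sy -> U \in Sy -> C S U = C U S.
  by move=> S U _ _; rewrite /C Qe_sym.
have hpsd : forall x : {set Seg} -> R,
    0 <= \sum_(S in Sy) \sum_(U in Sy) x S * x U * C S U.
  by move=> x; rewrite /C -Qe_bilin; exact: Qe_ge0.
have hdd : forall S, S \in Sy -> 0 < dd S.
  move=> S hS; rewrite /dd; apply: mulr_gt0 => //; rewrite ltr0n card_gt0.
  move: hp => /and3P [_ _ h0]; apply: contraNneq h0 => <-; exact: hS.
have hsys : forall x, seg_system yN sigma tau2 Sy x <-> sysq Sy C dd x.
  move=> x; rewrite /seg_system /sysq.
  have e : forall S, \sum_(S' in Sy) ((NS yN (S :|: S'))%:R / ((NS yN S)%:R * (NS yN S')%:R) * x S'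
                      * (\sum_(s in S) \sum_(t in S') sigma s t))
      + (x S - 1) * #|S|%:R * tau2 = \sum_(U in Sy) C S U * x U + (x S - 1) * dd S.
    move=> S; rewrite /dd mulrA; congr (_ + _); apply: eq_bigr => U _.
    rewrite /C Qe_bS; ring.
  by split => h S hS; [rewrite -e | rewrite e]; apply: h.

have [z hz] := sys_exists hpsd hdd.
exists z; split; first by apply/hsys.
split; first by move=> psi /hsys hpsi S hS; exact: (sys_uniq hsym hpsd hdd hz hpsi hS).
move=> phi; rewrite -(Fq_min hsym hpsd hdd hz); split.
  by move=> h y'; have := h y'; rewrite !(risk_seg hp hN) lee_fin.
by move=> h psi; rewrite !(risk_seg hp hN) lee_fin.
Qed.

End Struct.

Unset Implicit Arguments.
Local Close Scope ereal_scope.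
Local Open Scope ring_scope.

Theorem proposition2p4
  (d : measure_display) (T : measurableType d) (R : realType)
  (P : probability T R) (Seg : finType) (N : nat)
  (yN : 'I_N -> {set Seg})
  (theta : Seg -> T -> R) (eps : 'I_N -> Seg -> T -> R)
  (mu tau2 : R) (sigma : Seg -> Seg -> R) (y : {set Seg})
  (hyN : forall n, (0 < #|yN n|)%N)
  (htau : 0 < tau2)
  (htheta_L2 : forall s, theta s \in Lfun P 2%:E)
  (heps_L2 : forall n s, s \in yN n -> eps n s \in Lfun P 2%:E)
  (htheta_mean : forall s, ('E_P[theta s])%E = mu%:E)
  (htheta_var : forall s, ('V_P[theta s])%E = tau2%:E)
  (htheta_uncorr : forall s t, s != t -> covariance P (theta s) (theta t) = 0%E)
  (htheta_eps : forall s n t, t \in yN n -> covariance P (theta s) (eps n t) = 0%E)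
  (heps_mean : forall n s, s \in yN n -> ('E_P[eps n s])%E = 0%E)
  (heps_cov : forall n s t, s \in yN n -> t \in yN n ->
     covariance P (eps n s) (eps n t) = (sigma s t)%:E)
  (heps_indep : forall n m s t, n != m -> s \in yN n -> t \in yN m ->
     covariance P (eps n s) (eps m t) = 0%E) :
  (* (1) generalized segment-based estimator *)
  (forall Sy : {set {set Seg}},
     finset.partition Sy y ->
     (forall S, S \in Sy -> (0 < NS yN S)%N) ->
     exists phis : {set Seg} -> R,
       seg_system yN sigma tau2 Sy phis /\
       (forall psi, seg_system yN sigma tau2 Sy psi -> {in Sy, psi =1 phis}) /\
       (forall phi : {set Seg} -> R,
          (forall psi : {set Seg} -> R,
             (risk P (seg_est yN theta eps mu Sy phi) (truth theta y)
              <= risk P (seg_est yN theta eps mu Sy psi) (truth theta y))%E)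
          <-> {in Sy, phi =1 phis}))
  /\
  (* (2) route-based estimator *)
  (forall delta : {set {set Seg}},
     (forall y', y' \in delta -> exists n, yN n = y') ->
     (0 < Mdelta yN delta)%N ->
     forall phi : R,
       (risk P (route_est yN theta eps mu y delta
                  (phistar_route yN sigma mu tau2 y delta)) (truth theta y)
        <= risk P (route_est yN theta eps mu y delta phi) (truth theta y))%E).

Proof.
split.
  move=> Sy hp hN.
  exact: (part1 htheta_L2 heps_L2 htheta_mean htheta_var htheta_uncorr htheta_eps
            heps_mean heps_cov heps_indep htau hp hN).
move=> delta _ hM phi.
exact: (part2 htheta_L2 heps_L2 htheta_mean htheta_var htheta_uncorr htheta_eps
            heps_mean heps_cov heps_indep y hyN htau hM phi).
Qed.
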